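(* Assume the setting described in the context, assume $(L-1)\mathfrak m\neq0$, let $\xi=(\xi_1,\dots,\xi_{\ell_L})\in\mathbb R^{\ell_L}$ satisfy $\xi_1=\mathfrak m^{-1}\int_{[a,b]^{\ell_0}}f_1(x)\,\mu(dx)$, for $i,j\in\mathbb N_0$, $k\in\mathbb N$ let $\alpha_{i,j,k}=i\ell_{k-1}+j+\sum_{h=1}^{k-1}\ell_h(\ell_{h-1}+1)$, and let $\theta=(\theta_1,\dots,\theta_{\mathfrak d})$, $\vartheta=(\vartheta_1,\dots,\vartheta_{\mathfrak d})\in\mathbb R^{\mathfrak d}$ satisfy for all $i\in\{1,\dots,\ell_L\}$ and all $j\in\{1,\dots,\mathfrak d\}\setminus\big(\bigcup_{k=1}^{\ell_L}\{\alpha_{\ell_{L-1},1,L-1},\alpha_{0,1,L},\alpha_{\ell_L,k,L}\}\big)$ that $\theta_{\alpha_{\ell_{L-1},1,L-1}}=\vartheta_{\alpha_{0,1,L}}=1$, $\theta_{\alpha_{\ell_L,i,L}}=\vartheta_{\alpha_{\ell_L,i,L}}=\xi_i$, and $\theta_{\alpha_{0,1,L}}=\vartheta_{\alpha_{\ell_{L-1},1,L-1}}=\theta_j=\vartheta_j=0$. Then $$\mathcal L_\infty\Big(\frac{\theta+\vartheta}2\Big)=\Big[\frac{\mathcal L_\infty(\theta)+\mathcal L_\infty(\vartheta)}2\Big]+\frac{\mathfrak m}{16}>\frac{\mathcal L_\infty(\theta)+\mathcal L_\infty(\vartheta)}2.$$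
   Context: Setting. Let $L,\mathfrak d\in\mathbb N=\{1,2,\dots\}$, $(\ell_k)_{k\in\mathbb N_0}\subseteq\mathbb N$, $a\in\mathbb R$, $b\in(a,\infty)$ with $\mathfrak d=\sum_{k=1}^L\ell_k(\ell_{k-1}+1)$; let $\mathbf d_k=\sum_{h=1}^k\ell_h(\ell_{h-1}+1)$ for $k\in\mathbb N_0$. For $\theta=(\theta_1,\dots,\theta_{\mathfrak d})\in\mathbb R^{\mathfrak d}$, $k\in\{1,\dots,L\}$, $i\in\{1,\dots,\ell_k\}$, $j\in\{1,\dots,\ell_{k-1}\}$ let $\mathfrak w^{k,\theta}_{i,j}=\theta_{(i-1)\ell_{k-1}+j+\mathbf d_{k-1}}$ and $\mathfrak b^{k,\theta}_i=\theta_{\ell_k\ell_{k-1}+i+\mathbf d_{k-1}}$, let $\mathfrak w^{k,\theta}=(\mathfrak w^{k,\theta}_{i,j})_{i,j}\in\mathbb R^{\ell_k\times\ell_{k-1}}$, $\mathfrak b^{k,\theta}=(\mathfrak b^{k,\theta}_1,\dots,\mathfrak b^{k,\theta}_{\ell_k})\in\mathbb R^{\ell_k}$, and $\mathcal A^\theta_k(x)=\mathfrak b^{k,\theta}+\mathfrak w^{k,\theta}x$. Let $\mathfrak M_\infty(x_1,\dots,x_n)=(\max\{x_1,0\},\dots,\max\{x_n,0\})$ and $\|\cdot\|$ the Euclidean norm. Define $\mathcal N^{k,\theta}_\infty\colon\mathbb R^{\ell_0}\to\mathbb R^{\ell_k}$, $k\in\{1,\dots,L\}$, by $\mathcal N^{1,\theta}_\infty=\mathcal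 A^\theta_1$ and $\mathcal N^{k+1,\theta}_\infty(x)=\mathcal A^\theta_{k+1}(\mathfrak M_\infty(\mathcal N^{k,\theta}_\infty(x)))$. Let $\mu$ be a measure on the Borel $\sigma$-algebra of $[a,b]^{\ell_0}$ with $\mathfrak m=\mu([a,b]^{\ell_0})\in\mathbb R$, let $f=(f_1,\dots,f_{\ell_L})\colon[a,b]^{\ell_0}\to\mathbb R^{\ell_L}$ be measurable, and let $\mathcal L_\infty\colon\mathbb R^{\mathfrak d}\to\mathbb R$, $\mathcal L_\infty(\theta)=\int_{[a,b]^{\ell_0}}\|\mathcal N^{L,\theta}_\infty(x)-f(x)\|^2\,\mu(dx)$ (these integrals are real numbers as part of the setting). *)

(* Defs.v *)
From HB Require Import structures.
From mathcomp Require Import all_boot all_order all_algebra.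
From mathcomp Require Import all_classical all_reals all_analysis.
Set Implicit Arguments. Unset Strict Implicit. Unset Printing Implicit Defensive.
Import Order.TTheory GRing.Theory Num.Theory.
Import numFieldNormedType.Exports.
Local Open Scope ring_scope.
Local Open Scope classical_set_scope.

Section Defs.
Variable R : realType.

Definition borelRV (n : nat) := g_sigma_algebraType [set U : set 'rV[R]_n | open U].

(** 1-based coordinate access: [vc v i] = v_i for i in {1,..,n}, 0 otherwise. *)
Definition vc (n : nat) (v : 'rV[R]_n) (i : nat) : R :=
  oapp (fun j : 'I_n => v ord0 j) 0 (insub i.-1).

Variable ell : nat -> nat.

Definition dsum (k : nat) : nat := (\sum_(1 <= h < k.+1) ell h * (ell h.-1 + 1))%N.

Definition alpha (i j k : nat) : nat := (i * ell k.-1 + j + dsum k.-1)%N.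

Variable dd : nat.
Variable theta : 'rV[R]_dd.

Definition wgt (k i j : nat) : R := vc theta ((i - 1) * ell k.-1 + j + dsum k.-1).
Definition bias (k i : nat) : R := vc theta (ell k * ell k.-1 + i + dsum k.-1).

(** A_k(y) = b^k + w^k y, vectors as 1-indexed functions nat -> R *)
Definition Aff (k : nat) (y : nat -> R) : nat -> R :=
  fun i => bias k i + \sum_(1 <= j < (ell k.-1).+1) wgt k i j * y j.

Fixpoint Nnet (k : nat) (x : nat -> R) : nat -> R :=
  match k with
  | 0 => x
  | k'.+1 => Aff k'.+1 (match k' with
                        | 0 => x
                        | _ => fun j => Num.max (Nnet k' x j) 0
                        end)
  end.

Definition sqerr (L : nat) (f : 'rV[R]_(ell 0) -> 'rV[R]_(ell L))
  (x : 'rV[R]_(ell 0)) : R :=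
  \sum_(1 <= i < (ell L).+1) (Nnet L (vc x) i - vc (f x) i) ^+ 2.

End Defs.

Definition cube (R : realType) (n : nat) (a b : R) : set 'rV[R]_n :=
  [set x | forall i : 'I_n, a <= x ord0 i <= b].

Definition Linf (R : realType) (ell : nat -> nat) (dd L : nat) (a b : R)
  (mu : {measure set (borelRV R (ell 0)) -> \bar R})
  (f : 'rV[R]_(ell 0) -> 'rV[R]_(ell L)) (theta : 'rV[R]_dd) : R :=
  Rintegral mu (cube a b : set (borelRV R (ell 0))) (@sqerr R ell dd theta L f).

(* Main.v *)
Require Import Defs.
From HB Require Import structures.
From mathcomp Require Import all_boot all_order all_algebra.
From mathcomp Require Import all_classical all_reals all_analysis.
From mathcomp Require Import zify measurable_realfun ring lra.
Import Order.TTheory GRing.Theory Num.Theory.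
Import numFieldNormedType.Exports.
Local Open Scope ring_scope.
Local Open Scope classical_set_scope.

Lemma cube_meas (R : realType) n (a b : R) :
  measurable (cube a b : set (borelRV R n)).
Proof.
have cl : closed (cube a b : set 'rV[R]_n).
  have -> : cube a b = \bigcap_(i in [set: 'I_n]) ((fun x : 'rV[R]_n => x ord0 i) @^-1` `[a, b]).
    apply/seteqP; split => x /=.
      by move=> H i _ /=; rewrite in_itv /=; exact: H.
    by move=> H i; have := H i I; rewrite /= in_itv.
  apply: closed_bigI => i _; apply: preimage_closed; last exact: itv_closed.
  by move=> x _; apply: coord_continuous.
rewrite -[X in measurable X]setCK; apply: measurableC.
apply: sub_sigma_algebra; rewrite /=. exact: closed_openC.
Qed.

Lemma vc_mid (R : realType) n (u v : 'rV[R]_n) i :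
  vc ((2:R)^-1 *: (u + v)) i = 2^-1 * (vc u i + vc v i).
Proof. by rewrite /vc; case: insubP => [j _ _|_] /=; rewrite ?mxE ?addr0 ?mulr0. Qed.
Lemma dsumS (ell : nat -> nat) k : dsum ell k.+1 = (dsum ell k + ell k.+1 * (ell k + 1))%N.
Proof. by rewrite /dsum big_nat_recr. Qed.

Lemma NnetS2 (R : realType) ell dd (p : 'rV[R]_dd) k x :
  Nnet ell p k.+2 x = Aff ell p k.+2 (fun j => Num.max (Nnet ell p k.+1 x j) 0).
Proof. by []. Qed.

Lemma NnetS1 (R : realType) ell dd (p : 'rV[R]_dd) k x :
  exists y, Nnet ell p k.+1 x = Aff ell p k.+1 y.
Proof. by case: k => [|k]; eexists. Qed.

Lemma net_eval (R : realType) (ell : nat -> nat) (hell : forall k, (0 < ell k)%N) dd K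
  (hdd : dd = dsum ell K.+2) (p : 'rV[R]_dd) x
  (hz : forall j : nat, (1 <= j <= dd)%N ->
      j != alpha ell (ell K.+1) 1 K.+1 ->
      j != alpha ell 0 1 K.+2 ->
      (forall k : nat, (1 <= k <= ell K.+2)%N -> j != alpha ell (ell K.+2) k K.+2) ->
      vc p j = 0) i : (1 <= i <= ell K.+2)%N ->
  Nnet ell p K.+2 x i = vc p (alpha ell (ell K.+2) i K.+2) +
     (if i == 1%N then vc p (alpha ell 0 1 K.+2) * Num.max (vc p (alpha ell (ell K.+1) 1 K.+1)) 0 else 0).
Proof.
move=> hi.
have hD2 := dsumS ell K.+1. have hD1 := dsumS ell K.
rewrite mulnDr muln1 in hD2. rewrite mulnDr muln1 in hD1.
have e0 := hell K. have e1 := hell K.+1. have e2 := hell K.+2.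
subst dd.
have hN1 : forall j, (1 <= j <= ell K.+1)%N -> Nnet ell p K.+1 x j =
    if j == 1%N then vc p (alpha ell (ell K.+1) 1 K.+1) else 0.
  move=> j hj; have [y ->] := (@NnetS1 R ell _ p K x).
  rewrite /Aff big1_seq ?addr0; last first.
    move=> j' /andP[_]; rewrite mem_index_iota /= => hj'.
    have hle : ((j - 1).+1 * ell K <= ell K.+1 * ell K)%N by apply: leq_mul; lia.
    rewrite mulSn in hle.
    rewrite /wgt hz ?mul0r //=; rewrite /alpha /=; (try move=> k hk); (try apply/eqP); nia.
  rewrite /bias /=; case: eqP => [->|hj1]; first by rewrite /alpha.
  apply: hz; rewrite /alpha /=; (try move=> k hk); (try apply/eqP); nia.
rewrite NnetS2 /Aff (_ : (K.+2).-1 = K.+1) // big_ltn; last by rewrite ltnS.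
rewrite big1_seq ?addr0; last first.
  move=> j /andP[_]; rewrite mem_index_iota => hj.
  rewrite hN1; last lia.
  case: eqP => [?|_]; first lia.
  by rewrite maxxx mulr0.
rewrite hN1 // eqxx /bias /wgt /=.
case: eqP => [->|hi1]; first by rewrite /alpha /= !mul0n.
have hle : ((i - 1).+1 * ell K.+1 <= ell K.+2 * ell K.+1)%N by apply: leq_mul; lia.
rewrite mulSn in hle.
rewrite [vc p ((i - 1) * _ + 1 + _)]hz ?mul0r ?addr0 //; rewrite /alpha /=; (try move=> k hk); (try apply/eqP); nia.
Qed.

Lemma sqerr_eval (R : realType) (ell : nat -> nat) (hell : forall k, (0 < ell k)%N) dd K
  (hdd : dd = dsum ell K.+2) (p : 'rV[R]_dd) (f : 'rV[R]_(ell 0) -> 'rV[R]_(ell K.+2))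
  (xi : 'rV[R]_(ell K.+2)) x
  (hz : forall j : nat, (1 <= j <= dd)%N ->
      j != alpha ell (ell K.+1) 1 K.+1 ->
      j != alpha ell 0 1 K.+2 ->
      (forall k : nat, (1 <= k <= ell K.+2)%N -> j != alpha ell (ell K.+2) k K.+2) ->
      vc p j = 0)
  (hb : forall i : nat, (1 <= i <= ell K.+2)%N -> vc p (alpha ell (ell K.+2) i K.+2) = vc xi i) :
  @sqerr R ell dd p K.+2 f (x : 'rV[R]_(ell 0)) =
  (vc xi 1 + vc p (alpha ell 0 1 K.+2) * Num.max (vc p (alpha ell (ell K.+1) 1 K.+1)) 0
     - vc (f x) 1) ^+ 2
  + \sum_(2 <= i < (ell K.+2).+1) (vc xi i - vc (f x) i) ^+ 2.
Proof.
rewrite /sqerr big_ltn; last by rewrite ltnS.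
congr (_ + _).
  by rewrite (@net_eval R ell hell dd K hdd p (vc x) hz) ?hb //= (hell K.+2).
apply: eq_big_seq => i; rewrite mem_index_iota => hi.
rewrite (@net_eval R ell hell dd K hdd p (vc x) hz) ?hb //; try lia.
by case: eqP => [?|_]; [lia | rewrite addr0].
Qed.

Lemma cst_int d (T : measurableType d) (R : realType) (mu : {measure set T -> \bar R})
  (D : set T) (m : R) (k : R) : measurable D -> mu D = m%:E ->
  mu.-integrable D (EFin \o cst k).
Proof.
move=> mD hm; apply/integrableP; split; first exact/measurable_EFinP/measurable_cst.
rewrite (eq_integral (cst `|k|%:E)); last by move=> x _; rewrite /= ?abse_EFin.
by rewrite integral_cst // hm -EFinM ltry.
Qed.

Theorem corollary2p18 (R : realType) (L : nat) (ell : nat -> nat) (dd : nat)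
  (a b : R)
  (hL : (0 < L)%N) (hell : forall k : nat, (0 < ell k)%N)
  (hdd : dd = dsum ell L) (hab : a < b)
  (mu : {measure set (borelRV R (ell 0)) -> \bar R}) (m : R)
  (hm : mu (cube a b : set (borelRV R (ell 0))) = m%:E)
  (f : 'rV[R]_(ell 0) -> 'rV[R]_(ell L))
  (hf : forall i : 'I_(ell L),
      measurable_fun (cube a b : set (borelRV R (ell 0))) (fun x => f x ord0 i))
  (hint : forall th : 'rV[R]_dd,
      mu.-integrable (cube a b : set (borelRV R (ell 0)))
        (fun x => (@sqerr R ell dd th L f x)%:E))
  (hLm : (L - 1)%N%:R * m != 0)
  (xi : 'rV[R]_(ell L))
  (hxi : vc xi 1 = m^-1 * Rintegral mu (cube a b : set (borelRV R (ell 0)))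
                                (fun x => vc (f x) 1))
  (theta vartheta : 'rV[R]_dd)
  (hth1 : vc theta (alpha ell (ell (L - 1)%N) 1 (L - 1)%N) = 1)
  (hvth1 : vc vartheta (alpha ell 0 1 L) = 1)
  (hxith : forall i : nat, (1 <= i <= ell L)%N ->
      vc theta (alpha ell (ell L) i L) = vc xi i /\
      vc vartheta (alpha ell (ell L) i L) = vc xi i)
  (hth0 : vc theta (alpha ell 0 1 L) = 0)
  (hvth0 : vc vartheta (alpha ell (ell (L - 1)%N) 1 (L - 1)%N) = 0)
  (hzero : forall j : nat, (1 <= j <= dd)%N ->
      j != alpha ell (ell (L - 1)%N) 1 (L - 1)%N ->
      j != alpha ell 0 1 L ->
      (forall k : nat, (1 <= k <= ell L)%N -> j != alpha ell (ell L) k L) ->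
      vc theta j = 0 /\ vc vartheta j = 0) :
  let Loss := @Linf R ell dd L a b mu f in
  Loss ((2 : R)^-1 *: (theta + vartheta))
    = (Loss theta + Loss vartheta) / 2 + m / 16 /\
  (Loss theta + Loss vartheta) / 2 + m / 16 > (Loss theta + Loss vartheta) / 2.
Proof.
move=> Loss.
have L1 : (1 < L)%N.
  case: (ltnP 1 L) => // hle; exfalso.
  have h0 : (L - 1 = 0)%N by lia.
  by move: hLm; rewrite h0 mul0r eqxx.
have [K hK] : exists K, L = K.+2 by exists (L - 2)%N; lia.
subst L.
have m0 : m != 0 by apply: contraNneq hLm => ->; rewrite mulr0.
have mge : 0 <= m.
  have : (0 <= m%:E)%E by rewrite -hm; exact: measure_ge0.
  by rewrite lee_fin.
have mgt : 0 < m by rewrite lt_neqAle eq_sym m0.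
have e1 : (K.+2 - 1 = K.+1)%N by [].
rewrite e1 in hth1 hvth0 hzero.
set D := (cube a b : set (borelRV R (ell 0))).
have mD : measurable D by apply: cube_meas.
have hmD : mu D = m%:E := hm.
set mid := (2:R)^-1 *: (theta + vartheta).
set sB := alpha ell (ell K.+1) 1 K.+1.
set sW := alpha ell 0 1 K.+2.
pose h x := vc (f x) 1.
pose S0 x := (vc xi 1 - h x) ^+ 2
  + \sum_(2 <= i < (ell K.+2).+1) (vc xi i - vc (f x) i) ^+ 2.
have hSth : forall x, @sqerr R ell dd theta K.+2 f x = S0 x.
  move=> x; rewrite (@sqerr_eval R ell hell dd K hdd theta f xi x).
  - by rewrite -/sW -/sB hth0 mul0r addr0.
  - by move=> j hj n1 n2 n3; case: (hzero j hj n1 n2 n3).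
  - by move=> i hi; case: (hxith i hi).
have hSvth : forall x, @sqerr R ell dd vartheta K.+2 f x = S0 x.
  move=> x; rewrite (@sqerr_eval R ell hell dd K hdd vartheta f xi x).
  - by rewrite -/sW -/sB hvth0 maxxx mulr0 addr0.
  - by move=> j hj n1 n2 n3; case: (hzero j hj n1 n2 n3).
  - by move=> i hi; case: (hxith i hi).
pose g x := (vc xi 1 - h x) / 2 + 16^-1.
have hSmid : forall x, @sqerr R ell dd mid K.+2 f x = S0 x + g x.
  move=> x; rewrite (@sqerr_eval R ell hell dd K hdd mid f xi x).
  - rewrite -/sW -/sB !vc_mid hth0 hvth1 hth1 hvth0.
    have -> : Num.max (2^-1 * (1 + 0)) 0 = (2:R)^-1 :> R.
      by rewrite addr0 mulr1; apply/max_idPl; rewrite invr_ge0 ler0n.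
    rewrite /S0 /g /h; field; done.
  - move=> j hj n1 n2 n3; rewrite vc_mid.
    by case: (hzero j hj n1 n2 n3) => -> ->; rewrite addr0 mulr0.
  - move=> i hi; rewrite vc_mid; case: (hxith i hi) => -> ->; field; done.
have gint : mu.-integrable D (EFin \o g).
  apply: (eq_integrable mD _ _ _ (integrableB mD (hint mid) (hint theta))) => x _ /=.
  by rewrite -EFinB hSmid hSth; congr EFin; ring.
have cint : forall k : R, mu.-integrable D (EFin \o cst k).
  by move=> k; apply: cst_int mD hmD.
have hint' : mu.-integrable D (EFin \o h).
  apply: (eq_integrable mD _ _ _ (integrableB mD (cint (vc xi 1 + 8^-1))
     (integrableZl mD 2 gint))) => x _ /=.
  by rewrite -EFinD /g; congr EFin; field; done.
have hZ : mu.-integrable D (EFin \o (fun x => 2^-1 * h x)).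
  apply: (eq_integrable mD _ _ _ (integrableZl mD (2^-1) hint')) => x _ /=.
  by rewrite EFinM.
have Ig : Rintegral mu D g = m / 16.
  have -> : Rintegral mu D g = Rintegral mu D (fun x => (vc xi 1 / 2 + 16^-1) - 2^-1 * h x).
    by apply: eq_Rintegral => x _; rewrite /g; field; done.
  have hI : Rintegral mu D h = vc xi 1 * m.
    by rewrite hxi mulrC mulrA divff ?mul1r.
  apply: eq_trans (RintegralB mD (cint (vc xi 1 / 2 + 16^-1)) hZ) _.
  have E3 : Rintegral mu D (cst (vc xi 1 / 2 + 16^-1)) = (vc xi 1 / 2 + 16^-1) * m.
    by apply: eq_trans (Rintegral_cst mu mD _) _; rewrite hmD.
  have E2 : Rintegral mu D (fun x => 2^-1 * h x) = 2^-1 * (vc xi 1 * m).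
    by apply: eq_trans (RintegralZl _ mD hint') _; rewrite hI.
  rewrite E3 E2; field; done.
have Lth : Loss theta = Rintegral mu D S0.
  by apply: eq_Rintegral => x _; exact: hSth.
have Lvth : Loss vartheta = Rintegral mu D S0.
  by apply: eq_Rintegral => x _; exact: hSvth.
have S0int : mu.-integrable D (EFin \o S0).
  by apply: (eq_integrable mD _ _ _ (hint theta)) => x _ /=; congr EFin; exact: hSth.
have Lmid : Loss mid = Rintegral mu D S0 + m / 16.
  have -> : Loss mid = Rintegral mu D (fun x => S0 x + g x).
    by apply: eq_Rintegral => x _; exact: hSmid.
  by rewrite RintegralD // Ig.
rewrite Lmid Lth Lvth; split; first by field; done.
lra.
Qed.
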